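(* Let $k,\ell,n$ be integers with $2\le\ell<k/2$, $n\ge1$, and let $G_1$, $U_i$, $H_1=H_1^1\cup H_1^2$, $H_2$, $tr_1$ and $\min$ be as in the context. Let $s\ge1$ and let $P=(e,e_1,\dots,e_s,e')$ be an $(\ell,k)$-path (edges listed in order) with $e,e'\in H_1$ and $e_1,\dots,e_s\in H_2$. Then (i) $\min(e_1)=\dots=\min(e_s)\in tr_1(e)\cap tr_1(e')$; (ii) at most one of $e,e'$ belongs to $H_1^2$.
   Context: Let $G_1$ be a graph on vertex set $[n]=\{1,\dots,n\}$. Let $\{A_i,B_i: i=1,\dots,2n\}$ be $4n$ pairwise disjoint finite sets with $|A_i|=2\lfloor k/2\rfloor+\ell$ for $1\le i\le n$ and $|A_i|=2k-2\ell-3$ for $n+1\le i\le 2n$; put $U_i=A_i\cup B_i$ and $V=\bigcup_{i=1}^{2n}U_i$. For $S\subseteq V$ let $tr(S)=\{i:S\cap U_i\ne\emptyset\}$, $tr_1(S)=tr(S)\cap[n]$, $\min(S)=\min tr(S)$. Define $H_1^1$ as the set of $k$-subsets $e\subseteq V$ such that for some edge $\{i,j\}$ of $G_1$, $tr_1(e)=\{i,j\}$, $|A_i\cap e|\ge\lfloor k/2\rfloor$ and $|A_j\cap e|\ge\lfloor k/2\rfloor$. Define $H_1^2$ as the set of $k$-subsets $e\subseteq V$ such that for some $i\in[n]$, $tr(e)=\{i,n+i\}$, $|A_i\cap e|=\ell+1$ and $|A_{n+i}\cap e|=k-\ell-1$. Let $H_1=H_1^1\cup H_1^2$, and let $H_2$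 be the set of $k$-subsets $e\subseteq V$ with $|e\cap U_{\min(e)}|\ge k-\ell+1$. An $(\ell,k)$-path is a $k$-graph with distinct vertices $v_1,\dots,v_s$, $s\equiv\ell\pmod{k-\ell}$, $s\ge k$, and edges $\{v_{i(k-\ell)+1},\dots,v_{i(k-\ell)+k}\}$, $i=0,\dots,(s-k)/(k-\ell)$. *)

(* Defs.v *)
From mathcomp Require Import all_boot.
Set Implicit Arguments. Unset Strict Implicit. Unset Printing Implicit Defensive.

(* Model of the ground set V = U_1 u ... u U_{2n}, U_i = A_i u B_i (disjoint):
   V is a finite type T; [part v] is the (1-based) index i with v \in U_i, and
   [inA v] says whether v lies in A_{part v} (otherwise v lies in B_{part v}). *)
Section Defs.
Variables (T : finType) (part : T -> nat) (inA : pred T).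

Definition U (i : nat) : {set T} := [set v | part v == i].
Definition A (i : nat) : {set T} := [set v | (part v == i) && inA v].

Definition tr (S : {set T}) : pred nat := fun i => [exists v in S, part v == i].
Definition tr1 (n : nat) (S : {set T}) : pred nat :=
  fun i => (1 <= i <= n) && tr S i.
(* min(S) = min tr(S) (meaningful for nonempty S; the fold seed is the
   maximum of the part indices, hence does not affect the minimum). *)
Definition mintr (S : {set T}) : nat :=
  \big[minn / (\big[maxn/0]_(v in S) part v)]_(v in S) part v.

Definition H11 (k n : nat) (G1 : rel nat) (e : {set T}) : Prop :=
  #|e| = k /\
  exists i j, G1 i j /\ (forall m, tr1 n e m = (m == i) || (m == j)) /\
              k %/ 2 <= #|A i :&: e| /\ k %/ 2 <= #|A j :&: e|.

Definition H12 (k l n : nat) (e : {set T}) : Prop :=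
  #|e| = k /\
  exists i, 1 <= i <= n /\ (forall m, tr e m = (m == i) || (m == n + i)) /\
            #|A i :&: e| = l.+1 /\ #|A (n + i) :&: e| = k - l - 1.

Definition H1 (k l n : nat) (G1 : rel nat) (e : {set T}) : Prop :=
  H11 k n G1 e \/ H12 k l n e.

Definition H2 (k l : nat) (e : {set T}) : Prop :=
  #|e| = k /\ k - l + 1 <= #|e :&: U (mintr e)|.

End Defs.

(* The i-th edge (0-based) of the (l,k)-path with vertex sequence vs:
   { v_{i(k-l)+1}, ..., v_{i(k-l)+k} }. *)
Definition path_edge (T : finType) (k l : nat) (vs : seq T) (i : nat) : {set T} :=
  [set x in take k (drop (i * (k - l)) vs)].

(* Main.v *)
Require Import Defs.
From mathcomp Require Import all_boot.
From mathcomp Require Import zify.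
From HB Require Import structures.
Set Implicit Arguments. Unset Strict Implicit.

HB.instance Definition _ := SemiGroup.isComLaw.Build nat minn minnA minnC.

Lemma mintr_le (T : finType) (part : T -> nat) (S : {set T}) v :
  v \in S -> mintr part S <= part v.
Proof.
move=> vS; rewrite /mintr.
rewrite (bigD1 v) //=; exact: geq_minl.
Qed.

Lemma mintr_ex (T : finType) (part : T -> nat) (S : {set T}) v0 :
  v0 \in S -> exists2 v, v \in S & part v = mintr part S.
Proof.
move=> v0S; rewrite /mintr.
apply: (big_ind (fun x => exists2 v, v \in S & part v = x)).
- have hS : 0 < #|S| by apply/card_gt0P; exists v0.
  have [v vS ->] := eq_bigmax_cond part hS. by exists v.
- move=> x y [u uS <-] [w wS <-].
  case: (leqP (part u) (part w)) => h; [exists u => //; lia | exists w => //; lia].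
- move=> v vS; by exists v.
Qed.

Lemma ov (T : finType) (part : T -> nat) k l (e f : {set T}) :
  l < k -> H2 part k l e -> l <= #|e :&: f| ->
  exists2 v, v \in e :&: f & part v = mintr part e.
Proof.
move=> lk [ek hU] hf.
set a := mintr part e in hU *.
have c := cardsUI (e :&: f) (e :&: U part a).
have c3 : #|(e :&: f) :|: (e :&: U part a)| <= #|e|.
  by apply: subset_leq_card; rewrite subUset !subsetIl.
have : 0 < #|(e :&: f) :&: (e :&: U part a)| by lia.
case/card_gt0P => v; rewrite !inE => /andP[/andP[ve vf] /andP[_ pv]].
exists v; first by rewrite inE ve vf.
exact/eqP.
Qed.

Lemma H11_low (T : finType) (part : T -> nat) (inA : pred T) k n
  (G1 : rel nat) e (S : {set T}) a :
  irreflexive G1 -> (forall i j, G1 i j -> (1 <= i <= n) && (1 <= j <= n)) ->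
  H11 part inA k n G1 e -> S \subset e -> 2 <= #|S| ->
  (forall v, v \in S -> a <= part v) -> a <= n.
Proof.
move=> irr dom [ek [i [j [gij [_ [hi hj]]]]]] Se S2 low.
case: (leqP a n) => // han; exfalso.
have ij : i != j by apply/eqP => eij; move: gij; rewrite eij irr.
have /andP[/andP[_ hin] /andP[_ hjn]] := dom _ _ gij.
set X := A part inA i :&: e in hi. set Y := A part inA j :&: e in hj.
have XY0 : X :&: Y = set0.
  apply/setP => x; rewrite /X /Y /A !inE.
  apply/negbTE/negP => /andP[/andP[/andP[/eqP pi _] _] /andP[/andP[/eqP pj _] _]].
  by move: ij; rewrite -pi -pj eqxx.
have SZ0 : S :&: (X :|: Y) = set0.
  apply/setP => x; rewrite /X /Y /A !inE.
  apply/negbTE/negP => /andP[xS /orP[/andP[/andP[/eqP pi _] _]|/andP[/andP[/eqP pj _] _]]];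
  have := low x xS; lia.
have c1 := cardsUI X Y. rewrite XY0 cards0 in c1.
have c2 := cardsUI S (X :|: Y). rewrite SZ0 cards0 in c2.
have c3 : #|S :|: (X :|: Y)| <= #|e|.
  by apply: subset_leq_card; rewrite !subUset Se !subsetIr.
have := divn_eq k 2; have := ltn_pmod k (isT : 0 < 2). lia.
Qed.

Lemma cnt (T : finType) (part : T -> nat) (inA : pred T) (e f : {set T}) m :
  e :&: f = set0 ->
  #|A part inA m :&: e| + #|A part inA m :&: f| <= #|A part inA m|.
Proof.
move=> ef.
have c := cardsUI (A part inA m :&: e) (A part inA m :&: f).
have h0 : (A part inA m :&: e) :&: (A part inA m :&: f) = set0.
  apply/setP => x; rewrite !inE; apply/negbTE/negP => /andP[/andP[_ xe] /andP[_ xf]].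
  by have := in_set0 x; rewrite -ef inE xe xf.
rewrite h0 cards0 addn0 in c; rewrite -c.
by apply: subset_leq_card; rewrite subUset !subsetIl.
Qed.

Lemma ov_edge (T : finType) k l (vs : seq T) s j :
  l <= k -> uniq vs -> size vs = k + s.+1 * (k - l) -> j <= s ->
  l <= #|path_edge k l vs j :&: path_edge k l vs j.+1|.
Proof.
move=> lk hu hs js.
set w := take l (drop (j.+1 * (k - l)) vs).
have hle : j.+1 * (k - l) <= s.+1 * (k - l) by apply: leq_mul.
have sw : size w = l by rewrite size_takel // size_drop; lia.
have uw : uniq w by rewrite take_uniq // drop_uniq.
have cw : #|[set x in w]| = l by rewrite cardsE -sw; apply/card_uniqP.
rewrite -{1}cw.
apply: subset_leq_card; apply/subsetP => x; rewrite /path_edge !inE => xw.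
apply/andP; split.
- move: xw; rewrite /w mulSn -drop_drop take_drop => /mem_drop.
  by have -> : l + (k - l) = k by lia.
- by move: xw; rewrite /w -(take_takel _ lk) => /mem_take.
Qed.

Lemma disj_edge (T : finType) k l (vs : seq T) s :
  2 * l < k -> 1 <= s -> uniq vs ->
  path_edge k l vs 0 :&: path_edge k l vs s.+1 = set0.
Proof.
move=> hlk hs hu.
set D := s.+1 * (k - l).
have kD : k <= D.
  have : 2 * (k - l) <= D by rewrite /D; apply: leq_mul; lia.
  lia.
apply/setP => x; rewrite /path_edge !inE mul0n drop0.
apply/negbTE/negP => /andP[x1 x2].
move: hu; rewrite -(cat_take_drop D vs) cat_uniq => /and3P[_ /hasP hh _].
apply: hh; exists x; first exact: mem_take x2.
by move: x1; rewrite -(take_takel _ kD) => /mem_take.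
Qed.

(* The path P = (e, e_1, ..., e_s, e') has s+2 edges, i.e. distinct vertices
   v_1..v_m with m = k + (s+1)(k-l); e = edge 0, e_j = edge j, e' = edge (s+1). *)
Theorem claim3p3 (k l n : nat) (T : finType) (part : T -> nat) (inA : pred T)
  (G1 : rel nat)
  (hl : 2 <= l) (hlk : 2 * l < k) (hn : 1 <= n)
  (hG1sym : symmetric G1) (hG1irr : irreflexive G1)
  (hG1dom : forall i j, G1 i j -> (1 <= i <= n) && (1 <= j <= n))
  (hpart : forall v, 1 <= part v <= 2 * n)
  (hA1 : forall i, 1 <= i <= n -> #|A part inA i| = 2 * (k %/ 2) + l)
  (hA2 : forall i, n + 1 <= i <= 2 * n -> #|A part inA i| = 2 * k - 2 * l - 3)
  (s : nat) (hs : 1 <= s) (vs : seq T)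
  (huniq : uniq vs) (hsize : size vs = k + s.+1 * (k - l))
  (he : H1 part inA k l n G1 (path_edge k l vs 0))
  (he' : H1 part inA k l n G1 (path_edge k l vs s.+1))
  (hmid : forall j, 1 <= j <= s -> H2 part k l (path_edge k l vs j)) :
  (forall j, 1 <= j <= s ->
     mintr part (path_edge k l vs j) = mintr part (path_edge k l vs 1)) /\
  tr1 part n (path_edge k l vs 0) (mintr part (path_edge k l vs 1)) /\
  tr1 part n (path_edge k l vs s.+1) (mintr part (path_edge k l vs 1)) /\
  ~ (H12 part inA k l n (path_edge k l vs 0) /\
     H12 part inA k l n (path_edge k l vs s.+1)).
Proof.
have lk : l < k by lia.
have lk' : l <= k by lia.
have ove := fun j => ov_edge lk' huniq hsize (j := j).
have step : forall j, 1 <= j < s ->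
    mintr part (path_edge k l vs j.+1) = mintr part (path_edge k l vs j).
  move=> j hj.
  have [v vI pv] := ov lk (hmid j ltac:(lia)) (ove j ltac:(lia)).
  have [w wI pw] := ov (f := path_edge k l vs j) lk (hmid j.+1 ltac:(lia))
      ltac:(rewrite setIC; apply: ove; lia).
  move: vI wI; rewrite !in_setI => /andP[_ v1] /andP[_ w1].
  have := mintr_le part v1; have := mintr_le part w1; lia.
have hall : forall j, 1 <= j <= s ->
    mintr part (path_edge k l vs j) = mintr part (path_edge k l vs 1).
  elim => [|j IH] hj; first by lia.
  case: j IH hj => [|j] IH hj; first by [].
  rewrite step; last by lia.
  apply: IH; lia.
split; first exact: hall.
set a := mintr part (path_edge k l vs 1).
have [v0 v0I pv0] := ov (f := path_edge k l vs 0) lk (hmid 1 ltac:(lia))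
    ltac:(rewrite setIC; apply: ove; lia).
have low0 : forall v, v \in path_edge k l vs 0 :&: path_edge k l vs 1 -> a <= part v.
  by move=> v; rewrite in_setI => /andP[_ v1]; apply: mintr_le.
have [w0 w0I pw0] := ov lk (hmid s ltac:(lia)) (ove s (leqnn s)).
rewrite hall in pw0; last by lia.
have lows : forall v, v \in path_edge k l vs s :&: path_edge k l vs s.+1 -> a <= part v.
  move=> v; rewrite in_setI => /andP[v1 _].
  rewrite /a -(hall s) ?hs ?leqnn //; exact: mintr_le.
have tr0 : tr part (path_edge k l vs 0) a.
  apply/existsP; exists v0; move: v0I; rewrite in_setI => /andP[_ ->]; rewrite pv0 eqxx.
  done.
have trs : tr part (path_edge k l vs s.+1) a.
  apply/existsP; exists w0; move: w0I; rewrite in_setI => /andP[_ ->]; rewrite pw0 eqxx.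
  done.
have ha1 : 1 <= a by have := hpart v0; lia.
have dj := disj_edge hlk hs huniq.
have cntc : forall i, 1 <= i <= n ->
    #|A part inA (n + i) :&: path_edge k l vs 0| = k - l - 1 ->
    #|A part inA (n + i) :&: path_edge k l vs s.+1| = k - l - 1 -> False.
  move=> i hi c1 c2.
  have := cnt part inA (n + i) dj; rewrite c1 c2 hA2; lia.
have S0 : 2 <= #|path_edge k l vs 0 :&: path_edge k l vs 1|.
  have := ove 0 isT; lia.
have Ss : 2 <= #|path_edge k l vs s :&: path_edge k l vs s.+1|.
  have := ove s (leqnn s); lia.
have han : a <= n.
  case: (leqP a n) => // hna; exfalso.
  case: he => [h11|[_ [i [hi [htr [_ hc]]]]]].
    have := H11_low hG1irr hG1dom h11 (subsetIl _ _) S0 low0; lia.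
  move: tr0; rewrite htr => /orP[/eqP ai|/eqP ai]; first by lia.
  case: he' => [h11|[_ [i' [hi' [htr' [_ hc']]]]]].
    have := H11_low hG1irr hG1dom h11 (subsetIr _ _) Ss lows; lia.
  move: trs; rewrite htr' => /orP[/eqP ai'|/eqP ai']; first by lia.
  have ii : i' = i by lia.
  rewrite ii in hc'. exact: cntc hi hc hc'.
split; first by rewrite /tr1 ha1 han.
split; first by rewrite /tr1 ha1 han.
move=> [[_ [i [hi [htr [_ hc]]]]] [_ [i' [hi' [htr' [_ hc']]]]]].
move: tr0 trs; rewrite htr htr' => /orP[/eqP ai|/eqP ai] /orP[/eqP ai'|/eqP ai'];
  try lia; have ii : i' = i by lia.
all: rewrite ii in hc'; exact: cntc hi hc hc'.
Qed.
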